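(* In the block regularized minimum distance (RMD) setting of the context, suppose conditions (B1)–(B4) hold. If $\|\boldsymbol\theta_0\|_1^{(d,\tilde d)}\le K$ and the regularization parameter satisfies $\gamma_n\lesssim(K+1)\epsilon_{n1}+\epsilon_2$, then with probability at least $1-(\delta_{n1}+\delta_{n2})$ the block RMD estimator $\widehat{\boldsymbol\theta}$ satisfies $$\|\widehat{\boldsymbol\theta}-\boldsymbol\theta_0\|_1^{(d,\tilde d)}\lesssim s\mu^{-2}\{(K+1)\epsilon_{n1}+\epsilon_2\}.$$
   Context: Block norms: for a block matrix $\mathbf B=(\mathbf B_{ij})_{i\in[N_1],j\in[N_2]}$ with blocks $\mathbf B_{ij}\in\mathbb R^{m_1\times m_2}$, $\|\mathbf B\|^{(m_1,m_2)}_{\max}=\max_{i,j}\|\mathbf B_{ij}\|_F$; if $N_2=1$, $\|\mathbf B\|^{(m_1,m_2)}_1=\sum_i\|\mathbf B_i\|_F$. Setting: integers $p,d,\tilde d,L\ge1$, $q=pL$. The unknown $\boldsymbol\theta_0=(\boldsymbol\theta_{01}^{\mathrm T},\dots,\boldsymbol\theta_{0p}^{\mathrm T})^{\mathrm T}\in\mathbb R^{pd\times\tilde d}$, $\boldsymbol\theta_{0j}\in\mathbb R^{d\times\tilde d}$, is block $s$-sparse: $S=\{j:\|\boldsymbol\theta_{0j}\|_F\ne0\}$, $s=|S|$. There are a matrix $\mathbf G\in\mathbb R^{qd\times pd}$ (viewed as $q\times p$ blocks of size $d\times d$), $\mathbf g(\mathbf 0)\in\mathbb R^{qd\times\tilde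 d}$ and a bias $\mathbf R\in\mathbb R^{qd\times\tilde d}$ with $\mathbf G\boldsymbol\theta_0+\mathbf g(\mathbf 0)+\mathbf R=\mathbf 0$; write $\mathbf g(\boldsymbol\theta)=\mathbf G\boldsymbol\theta+\mathbf g(\mathbf 0)$. Given random empirical versions $\widehat{\mathbf G},\widehat{\mathbf g}(\mathbf 0)$ and $\widehat{\mathbf g}(\boldsymbol\theta)=\widehat{\mathbf G}\boldsymbol\theta+\widehat{\mathbf g}(\mathbf 0)$, the block RMD estimator is a solution $$\widehat{\boldsymbol\theta}\in\arg\min_{\boldsymbol\theta\in\mathbb R^{pd\times\tilde d}}\|\boldsymbol\theta\|_1^{(d,\tilde d)}\ \text{ subject to }\ \|\widehat{\mathbf g}(\boldsymbol\theta)\|^{(d,\tilde d)}_{\max}\le\gamma_n,$$ with $\gamma_n\ge0$. For $J\subset[q]$, $M\subset[p]$, $\mathbf G_{J,M}$ is the block submatrix with block rows in $J$ and block columns in $M$; $\sigma_{\min}(m,\mathbf G)=\min_{|M|\le m}\max_{|J|\le m}\sigma_{\min}(\mathbf G_{J,M})$ and $\sigma_{\max}(m,\mathbf G)=\max_{|M|\le m}\max_{|J|\le m}\sigma_{\max}(\mathbf G_{J,M})$, where $\sigma_{\min},\sigma_{\max}$ denote smallest and largest singular values. Conditions: (B1) there are $\epsilon_{n1},\delta_{n1}>0$ with $\|\widehat{\mathbf G}-\mathbf G\|^{(d,d)}_{\max}\vee\|\widehat{\mathbf g}(\mathbf 0)-\mathbf g(\mathbf 0)\|^{(d,\tilde d)}_{\max}\le\epsilon_{n1}$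 with probability at least $1-\delta_{n1}$. (B2) $\|\mathbf R\|^{(d,\tilde d)}_{\max}\le\epsilon_2$ for some $\epsilon_2>0$. (B3) there is $\delta_{n2}>0$ with $\|\widehat{\mathbf g}(\boldsymbol\theta_0)\|^{(d,\tilde d)}_{\max}\le\gamma_n$ with probability at least $1-\delta_{n2}$. (B4) there are a universal constant $c_5>0$ and $\mu>0$ with $\sigma_{\max}(m,\mathbf G)\ge c_5$ and $\sigma_{\min}(m,\mathbf G)/\sigma_{\max}(m,\mathbf G)\ge\mu$ for $m=16s/\mu^2$. The symbol $\lesssim$ hides constants independent of $(n,p,d,s,K,\mu)$. *)

(* Defs.v *)
From HB Require Import structures.
From mathcomp Require Import all_boot all_order all_algebra.
From mathcomp Require Import all_classical all_reals all_analysis.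
Set Implicit Arguments. Unset Strict Implicit. Unset Printing Implicit Defensive.
Import Order.TTheory GRing.Theory Num.Theory.
Local Open Scope classical_set_scope.
Local Open Scope ring_scope.

Section BlockDefs.
Variable R : realType.

Definition frob (a b : nat) (A : 'M[R]_(a, b)) : R :=
  Num.sqrt (\sum_(i < a) \sum_(j < b) A i j ^+ 2).

(* A block column matrix with n blocks of size a x b is represented by the
   family of its blocks; ||B||_1^{(a,b)} = sum of Frobenius norms of blocks. *)
Definition bnorm1 (n a b : nat) (B : 'I_n -> 'M[R]_(a, b)) : R :=
  \sum_(i < n) frob (B i).

Definition bnormmax (n a b : nat) (B : 'I_n -> 'M[R]_(a, b)) : R :=
  \big[Num.max/0]_(i < n) frob (B i).

Definition bnormmax2 (n1 n2 a b : nat) (B : 'I_n1 -> 'I_n2 -> 'M[R]_(a, b)) : R :=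
  \big[Num.max/0]_(i < n1) \big[Num.max/0]_(j < n2) frob (B i j).

Definition bapply (q p d dt : nat) (G : 'I_q -> 'I_p -> 'M[R]_(d, d))
    (th : 'I_p -> 'M[R]_(d, dt)) : 'I_q -> 'M[R]_(d, dt) :=
  fun i => \sum_(j < p) G i j *m th j.

Definition gfun (q p d dt : nat) (G : 'I_q -> 'I_p -> 'M[R]_(d, d))
    (g0 : 'I_q -> 'M[R]_(d, dt)) (th : 'I_p -> 'M[R]_(d, dt)) :
    'I_q -> 'M[R]_(d, dt) :=
  fun i => bapply G th i + g0 i.

Definition bsupp (p d dt : nat) (th : 'I_p -> 'M[R]_(d, dt)) : {set 'I_p} :=
  [set j | frob (th j) != 0].

Definition subnorm (q p d : nat) (G : 'I_q -> 'I_p -> 'M[R]_(d, d))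
    (J : {set 'I_q}) (M : {set 'I_p}) (x : 'I_p -> 'cV[R]_d) : R :=
  Num.sqrt (\sum_(i in J) frob (\sum_(j in M) G i j *m x j) ^+ 2).

Definition vnorm (p d : nat) (M : {set 'I_p}) (x : 'I_p -> 'cV[R]_d) : R :=
  Num.sqrt (\sum_(j in M) frob (x j) ^+ 2).

(* Smallest / largest singular value of the block submatrix G_{J,M}
   (a (|J| d) x (|M| d) matrix), variationally:
   sigma_min = inf_{x <> 0} |G_{J,M} x| / |x|,
   sigma_max = sup_{x <> 0} |G_{J,M} x| / |x|. *)
Definition sv_min (q p d : nat) (G : 'I_q -> 'I_p -> 'M[R]_(d, d))
    (J : {set 'I_q}) (M : {set 'I_p}) : R :=
  inf [set subnorm G J M x / vnorm M x | x in [set x | vnorm M x != 0]].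

Definition sv_max (q p d : nat) (G : 'I_q -> 'I_p -> 'M[R]_(d, d))
    (J : {set 'I_q}) (M : {set 'I_p}) : R :=
  sup [set subnorm G J M x / vnorm M x | x in [set x | vnorm M x != 0]].

Definition sigma_min_m (q p d : nat) (m : R) (G : 'I_q -> 'I_p -> 'M[R]_(d, d)) : R :=
  inf [set v | exists M : {set 'I_p}, [/\ (0 < #|M|)%N, (#|M|%:R <= m)
     & v = sup [set sv_min G J M | J in [set J : {set 'I_q} | #|J|%:R <= m]]]].

Definition sigma_max_m (q p d : nat) (m : R) (G : 'I_q -> 'I_p -> 'M[R]_(d, d)) : R :=
  sup [set v | exists M : {set 'I_p}, exists J : {set 'I_q},
     [/\ #|M|%:R <= m, #|J|%:R <= m & v = sv_max G J M]].

Definition is_rmd (q p d dt : nat) (Gh : 'I_q -> 'I_p -> 'M[R]_(d, d))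
    (gh0 : 'I_q -> 'M[R]_(d, dt)) (gam : R) (th : 'I_p -> 'M[R]_(d, dt)) : Prop :=
  bnormmax (gfun Gh gh0 th) <= gam /\
  forall th' : 'I_p -> 'M[R]_(d, dt),
    bnormmax (gfun Gh gh0 th') <= gam -> bnorm1 th <= bnorm1 th'.

End BlockDefs.

(* Main.v *)
Require Import Defs.
From HB Require Import structures.
From mathcomp Require Import all_boot all_order all_algebra.
From mathcomp Require Import all_classical all_reals all_analysis.
From mathcomp Require Import ring lra zify.
Import Order.TTheory GRing.Theory Num.Theory.
Local Open Scope classical_set_scope.
Local Open Scope ring_scope.

Section Helpers.
Set Implicit Arguments. Unset Strict Implicit. Unset Printing Implicit Defensive.

Section Aux.
Variable R : realType.

Lemma CS (I : finType) (P : pred I) (u v : I -> R) :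
  (\sum_(i | P i) u i * v i) ^+ 2 <=
  (\sum_(i | P i) u i ^+ 2) * (\sum_(i | P i) v i ^+ 2).
Proof.
have H : 0 <= \sum_(i | P i) \sum_(j | P j) (u i * v j - u j * v i) ^+ 2.
  by apply: sumr_ge0 => i _; apply: sumr_ge0 => j _; exact: sqr_ge0.
have E : \sum_(i | P i) \sum_(j | P j) (u i * v j - u j * v i) ^+ 2 =
   \sum_(i | P i) \sum_(j | P j) (u i ^+ 2 * v j ^+ 2) +
   \sum_(i | P i) \sum_(j | P j) (u j ^+ 2 * v i ^+ 2) -
   2 * \sum_(i | P i) \sum_(j | P j) (u i * v i * (u j * v j)).
  rewrite -big_split /= mulr_sumr -sumrB; apply: eq_bigr => i _.
  rewrite -big_split /= mulr_sumr -sumrB; apply: eq_bigr => j _.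
  ring.
have E3 : \sum_(i | P i) \sum_(j | P j) (u j ^+ 2 * v i ^+ 2) =
   \sum_(i | P i) \sum_(j | P j) (u i ^+ 2 * v j ^+ 2) by rewrite exchange_big.
rewrite E3 in E.
have E1 : \sum_(i | P i) \sum_(j | P j) (u i ^+ 2 * v j ^+ 2) =
   (\sum_(i | P i) u i ^+ 2) * (\sum_(i | P i) v i ^+ 2).
  by rewrite mulr_suml; apply: eq_bigr => i _; rewrite mulr_sumr.
have E2 : \sum_(i | P i) \sum_(j | P j) (u i * v i * (u j * v j)) =
   (\sum_(i | P i) u i * v i) ^+ 2.
  by rewrite expr2 mulr_suml; apply: eq_bigr => i _; rewrite mulr_sumr.
rewrite E1 E2 in E; rewrite E in H; lra.
Qed.

Lemma sum_sq_ge0 (I : finType) (P : pred I) (u : I -> R) :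
  0 <= \sum_(i | P i) u i ^+ 2.
Proof. by apply: sumr_ge0 => i _; exact: sqr_ge0. Qed.

Lemma mink (I : finType) (P : pred I) (u v : I -> R) :
  Num.sqrt (\sum_(i | P i) (u i + v i) ^+ 2) <=
  Num.sqrt (\sum_(i | P i) u i ^+ 2) + Num.sqrt (\sum_(i | P i) v i ^+ 2).
Proof.
set a := \sum_(i | P i) u i ^+ 2; set b := \sum_(i | P i) v i ^+ 2.
have a0 : 0 <= a by exact: sum_sq_ge0.
have b0 : 0 <= b by exact: sum_sq_ge0.
rewrite -ler_sqr ?nnegrE ?addr_ge0 ?sqrtr_ge0 // sqr_sqrtr ?sum_sq_ge0 //.
have -> : \sum_(i | P i) (u i + v i) ^+ 2 = a + b + 2 * \sum_(i | P i) u i * v i.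
  rewrite /a /b -big_split /= mulr_sumr -big_split /=; apply: eq_bigr => i _; ring.
have cs := CS P u v.
have h : \sum_(i | P i) u i * v i <= Num.sqrt a * Num.sqrt b.
  rewrite -sqrtrM //; apply: le_trans (ler_norm _) _.
  by rewrite -sqrtr_sqr ler_sqrt // mulr_ge0.
have sa := sqr_sqrtr a0; have sb := sqr_sqrtr b0.
nra.
Qed.

Lemma sqrt_sum_le (I : finType) (P : pred I) (f : I -> R) :
  (forall i, P i -> 0 <= f i) ->
  Num.sqrt (\sum_(i | P i) f i ^+ 2) <= \sum_(i | P i) f i.
Proof.
move=> f0.
suff [] : 0 <= \sum_(i | P i) f i ^+ 2 /\ Num.sqrt (\sum_(i | P i) f i ^+ 2) <= \sum_(i | P i) f i by [].
apply: (big_ind2 (fun x y => 0 <= x /\ Num.sqrt x <= y)).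
- by rewrite sqrtr0.
- move=> x1 x2 y1 y2 [h1 h2] [h3 h4]; split; first exact: addr_ge0.
  apply: le_trans (lerD h2 h4).
  rewrite -ler_sqr ?nnegrE ?addr_ge0 ?sqrtr_ge0 // sqr_sqrtr ?addr_ge0 //.
  rewrite sqrrD !sqr_sqrtr //.
  have := mulr_ge0 (sqrtr_ge0 x1) (sqrtr_ge0 y1); rewrite mulr2n; lra.
- move=> i Pi; split; first exact: sqr_ge0.
  by rewrite sqrtr_sqr ger0_norm ?f0.
Qed.

Lemma sum_le_card (I : finType) (P : pred I) (f : I -> R) :
  (\sum_(i | P i) f i) ^+ 2 <= #|[pred i | P i]|%:R * \sum_(i | P i) f i ^+ 2.
Proof.
have := CS P f (fun _ => 1).
under eq_bigr do rewrite mulr1.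
under [X in _ * X]eq_bigr do rewrite expr1n.
rewrite sumr_const mulrC.
by [].
Qed.


Lemma frob_sq (a b : nat) (A : 'M[R]_(a, b)) :
  frob A ^+ 2 = \sum_i \sum_j A i j ^+ 2.
Proof. by rewrite /frob sqr_sqrtr //; apply: sumr_ge0 => i _; exact: sum_sq_ge0. Qed.

Lemma frobE (a b : nat) (A : 'M[R]_(a, b)) :
  frob A = Num.sqrt (\sum_(pr : 'I_a * 'I_b) A pr.1 pr.2 ^+ 2).
Proof. by rewrite /frob pair_bigA. Qed.

Lemma frob_ge0 (a b : nat) (A : 'M[R]_(a, b)) : 0 <= frob A.
Proof. exact: sqrtr_ge0. Qed.

Lemma frob0 (a b : nat) : frob (0 : 'M[R]_(a, b)) = 0.
Proof.
rewrite frobE big1 ?sqrtr0 // => pr _; by rewrite mxE expr0n.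
Qed.

Lemma frob_eq0 (a b : nat) (A : 'M[R]_(a, b)) : frob A = 0 -> A = 0.
Proof.
rewrite frobE => /eqP; rewrite sqrtr_eq0 => h.
have h0 : \sum_(pr : 'I_a * 'I_b) A pr.1 pr.2 ^+ 2 = 0.
  by apply/eqP; rewrite eq_le h sum_sq_ge0.
apply/matrixP => i j; rewrite mxE.
have /psumr_eq0P H := h0.
have := H (fun _ _ => sqr_ge0 _) (i, j) isT; rewrite /=.
by move/eqP; rewrite sqrf_eq0 => /eqP.
Qed.


Lemma frobN (a b : nat) (A : 'M[R]_(a, b)) : frob (- A) = frob A.
Proof. by rewrite !frobE; congr Num.sqrt; apply: eq_bigr => pr _; rewrite mxE sqrrN. Qed.

Lemma frobD (a b : nat) (A B : 'M[R]_(a, b)) : frob (A + B) <= frob A + frob B.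
Proof.
rewrite !frobE.
under eq_bigr do rewrite mxE.
exact: mink.
Qed.

Lemma frobB (a b : nat) (A B : 'M[R]_(a, b)) : frob (A - B) <= frob A + frob B.
Proof. by rewrite -(frobN B); exact: frobD. Qed.

Lemma frob_sum (a b : nat) (I : finType) (P : pred I) (F : I -> 'M[R]_(a, b)) :
  frob (\sum_(i | P i) F i) <= \sum_(i | P i) frob (F i).
Proof.
apply: (big_ind2 (fun x y => frob x <= y)); first by rewrite frob0.
- by move=> x1 x2 y1 y2 h1 h2; apply: le_trans (frobD _ _) (lerD h1 h2).
- by [].
Qed.

Lemma frobM (a b c : nat) (A : 'M[R]_(a, b)) (B : 'M[R]_(b, c)) :
  frob (A *m B) <= frob A * frob B.
Proof.
rewrite /frob -sqrtrM; last by apply: sumr_ge0 => i _; exact: sum_sq_ge0.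
rewrite ler_sqrt; last by apply: mulr_ge0; apply: sumr_ge0 => i _; exact: sum_sq_ge0.
have -> : (\sum_i \sum_j A i j ^+ 2) * (\sum_i \sum_j B i j ^+ 2) =
   \sum_i \sum_k (\sum_j A i j ^+ 2) * (\sum_j B j k ^+ 2).
  rewrite mulr_suml; apply: eq_bigr => i _.
  rewrite exchange_big /= mulr_sumr; apply: eq_bigr => k _.
  by [].
apply: ler_sum => i _; apply: ler_sum => k _.
rewrite mxE; exact: CS.
Qed.


Lemma le_bnormmax (n a b : nat) (B : 'I_n -> 'M[R]_(a, b)) i :
  frob (B i) <= bnormmax B.
Proof. exact: le_bigmax. Qed.

Lemma le_bnormmax2 (n1 n2 a b : nat) (B : 'I_n1 -> 'I_n2 -> 'M[R]_(a, b)) i j :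
  frob (B i j) <= bnormmax2 B.
Proof. apply: le_trans (le_bigmax _ _ i); exact: le_bigmax. Qed.

Lemma bnorm1_ge0 (n a b : nat) (B : 'I_n -> 'M[R]_(a, b)) : 0 <= bnorm1 B.
Proof. by apply: sumr_ge0 => i _; exact: frob_ge0. Qed.


Lemma term_le_sum (I : finType) (P : pred I) (F : I -> R) j :
  P j -> (forall i, P i -> 0 <= F i) -> F j <= \sum_(i | P i) F i.
Proof.
move=> Pj F0; rewrite (bigD1 j) //= lerDl; apply: sumr_ge0 => i /andP[Pi _]; exact: F0.
Qed.

Definition Cb (q p d : nat) (G : 'I_q -> 'I_p -> 'M[R]_(d, d)) : R :=
  \sum_i \sum_j frob (G i j).

Lemma frob_le_vnorm (p d : nat) (M : {set 'I_p}) (x : 'I_p -> 'cV[R]_d) j :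
  j \in M -> frob (x j) <= vnorm M x.
Proof.
move=> jM; rewrite /vnorm -(ger0_norm (frob_ge0 (x j))) -sqrtr_sqr ler_sqrt;
  last by apply: sumr_ge0 => i _; exact: sqr_ge0.
by apply: (term_le_sum (P := fun i => i \in M)) => // i _; exact: sqr_ge0.
Qed.

Lemma vnorm_ge0 (p d : nat) (M : {set 'I_p}) (x : 'I_p -> 'cV[R]_d) : 0 <= vnorm M x.
Proof. exact: sqrtr_ge0. Qed.

Lemma subnorm_ge0 (q p d : nat) G (J : {set 'I_q}) (M : {set 'I_p}) (x : 'I_p -> 'cV[R]_d) :
  0 <= subnorm G J M x.
Proof. exact: sqrtr_ge0. Qed.

Lemma sub_bound (q p d : nat) (G : 'I_q -> 'I_p -> 'M[R]_(d, d)) J M x :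
  subnorm G J M x <= Cb G * vnorm M x.
Proof.
rewrite /subnorm.
apply: le_trans (sqrt_sum_le _) _; first by move=> i _; exact: frob_ge0.
rewrite /Cb mulr_suml.
apply: le_trans (_ : \sum_(i in J) (\sum_j frob (G i j)) * vnorm M x <= _).
  apply: ler_sum => i _.
  apply: le_trans; first exact: frob_sum.
  rewrite mulr_suml.
  apply: le_trans (_ : \sum_(j in M) frob (G i j) * vnorm M x <= _).
    apply: ler_sum => j jM; apply: le_trans (frobM _ _) _.
    by apply: ler_wpM2l; [exact: frob_ge0 | exact: frob_le_vnorm].
  rewrite [X in _ <= X](bigID (fun j => j \in M)) /= lerDl.
  by apply: sumr_ge0 => j _; apply: mulr_ge0; [exact: frob_ge0 | exact: vnorm_ge0].
rewrite [X in _ <= X](bigID (fun i => i \in J)) /= lerDl.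
apply: sumr_ge0 => i _; apply: mulr_ge0; last exact: vnorm_ge0.
by apply: sumr_ge0 => j _; exact: frob_ge0.
Qed.

Definition ratios (q p d : nat) (G : 'I_q -> 'I_p -> 'M[R]_(d, d)) J M :=
  [set subnorm G J M x / vnorm M x | x in [set x | vnorm M x != 0]].

Lemma ratios_ub (q p d : nat) (G : 'I_q -> 'I_p -> 'M[R]_(d, d)) J M :
  ubound (ratios G J M) (Cb G).
Proof.
move=> r [x /= xn0 <-].
have xp : 0 < vnorm M x by rewrite lt0r xn0 vnorm_ge0.
by rewrite ler_pdivrMr //; exact: sub_bound.
Qed.

Lemma ratios_lb (q p d : nat) (G : 'I_q -> 'I_p -> 'M[R]_(d, d)) J M :
  lbound (ratios G J M) 0.
Proof.
move=> r [x /= xn0 <-]; apply: divr_ge0; [exact: subnorm_ge0 | exact: vnorm_ge0].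
Qed.

Lemma sv_max_ge0 (q p d : nat) (G : 'I_q -> 'I_p -> 'M[R]_(d, d)) J M :
  0 <= sv_max G J M.
Proof.
rewrite /sv_max -/(ratios G J M).
have [[r Sr]|S0] := pselect (ratios G J M !=set0).
  apply: (le_trans (y := r)); first exact: (ratios_lb Sr).
  by apply: ub_le_sup => //; exists (Cb G); exact: ratios_ub.
rewrite sup_out //; case=> h _; exact: S0.
Qed.

Lemma sv_max_le (q p d : nat) (G : 'I_q -> 'I_p -> 'M[R]_(d, d)) J M :
  sv_max G J M <= Cb G.
Proof.
rewrite /sv_max -/(ratios G J M).
have [Sn|S0] := pselect (ratios G J M !=set0).
  apply: ge_sup => //; exact: ratios_ub.
rewrite sup_out; last by case=> h _; exact: S0.
by apply: sumr_ge0 => i _; apply: sumr_ge0 => j _; exact: frob_ge0.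
Qed.

Lemma sv_min_ge0 (q p d : nat) (G : 'I_q -> 'I_p -> 'M[R]_(d, d)) J M :
  0 <= sv_min G J M.
Proof.
rewrite /sv_min -/(ratios G J M).
have [Sn|S0] := pselect (ratios G J M !=set0).
  apply: lb_le_inf => //; exact: ratios_lb.
suff -> : ratios G J M = set0 by rewrite inf0.
by apply/eqP/negPn/negP => h; apply: S0; exact/set0P.
Qed.

Lemma sv_min_le (q p d : nat) (G : 'I_q -> 'I_p -> 'M[R]_(d, d)) J M x :
  vnorm M x != 0 -> sv_min G J M <= subnorm G J M x / vnorm M x.
Proof.
move=> xn0; rewrite /sv_min -/(ratios G J M).
apply: ge_inf; first by exists 0; exact: ratios_lb.
by exists x.
Qed.

Lemma le_sv_max (q p d : nat) (G : 'I_q -> 'I_p -> 'M[R]_(d, d)) J M x :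
  vnorm M x != 0 -> subnorm G J M x / vnorm M x <= sv_max G J M.
Proof.
move=> xn0; rewrite /sv_max -/(ratios G J M).
apply: ub_le_sup; first by exists (Cb G); exact: ratios_ub.
by exists x.
Qed.

Lemma sv_min_mul (q p d : nat) (G : 'I_q -> 'I_p -> 'M[R]_(d, d)) J M x :
  sv_min G J M * vnorm M x <= subnorm G J M x.
Proof.
have [x0|xn0] := eqVneq (vnorm M x) 0.
  by rewrite x0 mulr0; exact: subnorm_ge0.
have xp : 0 < vnorm M x by rewrite lt0r xn0 vnorm_ge0.
by rewrite -ler_pdivlMr //; exact: sv_min_le.
Qed.

Lemma sv_max_mul (q p d : nat) (G : 'I_q -> 'I_p -> 'M[R]_(d, d)) J M x :
  subnorm G J M x <= sv_max G J M * vnorm M x.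
Proof.
have [x0|xn0] := eqVneq (vnorm M x) 0.
  by rewrite x0 mulr0; have := sub_bound G J M x; rewrite x0 mulr0.
have xp : 0 < vnorm M x by rewrite lt0r xn0 vnorm_ge0.
by rewrite -ler_pdivrMr //; exact: le_sv_max.
Qed.

Lemma sv_min_le_max (q p d : nat) (G : 'I_q -> 'I_p -> 'M[R]_(d, d)) J M (x : 'I_p -> 'cV[R]_d) :
  vnorm M x != 0 -> sv_min G J M <= sv_max G J M.
Proof. by move=> xn0; apply: le_trans (sv_min_le _ _ xn0) (le_sv_max _ _ xn0). Qed.


Lemma frob_sq_col (a b : nat) (A : 'M[R]_(a, b)) :
  frob A ^+ 2 = \sum_c frob (col c A) ^+ 2.
Proof.
rewrite frob_sq exchange_big /=; apply: eq_bigr => c _.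
rewrite frob_sq; apply: eq_bigr => i _.
by rewrite big_ord1 mxE.
Qed.

Lemma col_Gsum (q p d dt : nat) (G : 'I_q -> 'I_p -> 'M[R]_(d, d)) (M : {set 'I_p})
  (X : 'I_p -> 'M[R]_(d, dt)) i c :
  col c (\sum_(j in M) G i j *m X j) = \sum_(j in M) G i j *m col c (X j).
Proof.
apply/matrixP => k l; rewrite !mxE !summxE; apply: eq_bigr => j _.
by rewrite !mxE; apply: eq_bigr => m _; rewrite !mxE.
Qed.

Definition SNm (q p d dt : nat) (G : 'I_q -> 'I_p -> 'M[R]_(d, d)) (J : {set 'I_q})
  (M : {set 'I_p}) (X : 'I_p -> 'M[R]_(d, dt)) : R :=
  Num.sqrt (\sum_(i in J) frob (\sum_(j in M) G i j *m X j) ^+ 2).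

Definition VNm (p d dt : nat) (M : {set 'I_p}) (X : 'I_p -> 'M[R]_(d, dt)) : R :=
  Num.sqrt (\sum_(j in M) frob (X j) ^+ 2).

Lemma SNm_ge0 (q p d dt : nat) G J M (X : 'I_p -> 'M[R]_(d, dt)) :
  0 <= @SNm q p d dt G J M X.
Proof. exact: sqrtr_ge0. Qed.

Lemma VNm_ge0 (p d dt : nat) M (X : 'I_p -> 'M[R]_(d, dt)) : 0 <= VNm M X.
Proof. exact: sqrtr_ge0. Qed.

Lemma SNm_sq (q p d dt : nat) G J M (X : 'I_p -> 'M[R]_(d, dt)) :
  @SNm q p d dt G J M X ^+ 2 = \sum_c subnorm G J M (fun j => col c (X j)) ^+ 2.
Proof.
rewrite /SNm sqr_sqrtr; last by apply: sumr_ge0 => i _; exact: sqr_ge0.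
under [RHS]eq_bigr => c _ do rewrite /subnorm sqr_sqrtr ?sum_sq_ge0 //.
rewrite exchange_big /=; apply: eq_bigr => i _.
by rewrite frob_sq_col; apply: eq_bigr => c _; rewrite col_Gsum.
Qed.

Lemma VNm_sq (p d dt : nat) M (X : 'I_p -> 'M[R]_(d, dt)) :
  VNm M X ^+ 2 = \sum_c vnorm M (fun j => col c (X j)) ^+ 2.
Proof.
rewrite /VNm sqr_sqrtr; last by apply: sumr_ge0 => i _; exact: sqr_ge0.
under [RHS]eq_bigr => c _ do rewrite /vnorm sqr_sqrtr ?sum_sq_ge0 //.
rewrite exchange_big /=; apply: eq_bigr => i _.
by rewrite frob_sq_col.
Qed.

Lemma SNm_lower (q p d dt : nat) G J M (X : 'I_p -> 'M[R]_(d, dt)) :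
  sv_min G J M * VNm M X <= @SNm q p d dt G J M X.
Proof.
rewrite -ler_sqr ?nnegrE ?mulr_ge0 ?sv_min_ge0 ?VNm_ge0 ?SNm_ge0 //.
rewrite exprMn SNm_sq VNm_sq mulr_sumr; apply: ler_sum => c _.
rewrite -exprMn ler_sqr ?nnegrE ?mulr_ge0 ?sv_min_ge0 ?vnorm_ge0 ?subnorm_ge0 //.
exact: sv_min_mul.
Qed.

Lemma SNm_upper (q p d dt : nat) G J M (X : 'I_p -> 'M[R]_(d, dt)) :
  @SNm q p d dt G J M X <= sv_max G J M * VNm M X.
Proof.
rewrite -ler_sqr ?nnegrE ?mulr_ge0 ?sv_max_ge0 ?VNm_ge0 ?SNm_ge0 //.
rewrite exprMn SNm_sq VNm_sq mulr_sumr; apply: ler_sum => c _.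
rewrite -exprMn ler_sqr ?nnegrE ?mulr_ge0 ?sv_max_ge0 ?vnorm_ge0 ?subnorm_ge0 //.
exact: sv_max_mul.
Qed.


Lemma exists_max (I : finType) (X : {set I}) (a : I -> R) :
  (0 < #|X|)%N -> exists2 j0, j0 \in X & forall j, j \in X -> a j <= a j0.
Proof.
case/card_gt0P => i0 Xi0.
case: (arg_maxP a Xi0) => j0 Xj0 H.
by exists j0 => // j Xj; exact: H.
Qed.

Lemma topk (I : finType) (a : I -> R) (U : {set I}) (k : nat) :
  (k <= #|U|)%N -> exists T : {set I},
    [/\ T \subset U, #|T| = k & forall i j, i \in T -> j \in U :\: T -> a j <= a i].
Proof.
elim: k => [|k IH] hk.
  by exists finset.set0; split; [exact: finset.sub0set | exact: cards0 | move=> i j; rewrite inE].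
have [T [TU cT HT]] := IH (ltnW hk).
have : (0 < #|U :\: T|)%N.
  rewrite cardsD (finset.setIidPr TU) cT; by rewrite subn_gt0.
case/(exists_max a) => j0 j0in Hj0.
move: (j0in); rewrite inE => /andP[j0T j0U].
exists (j0 |: T); split.
- by rewrite finset.subUset finset.sub1set j0U TU.
- by rewrite cardsU1 j0T cT.
- move=> i j; rewrite in_setU1 => /orP[/eqP-> | iT] jin.
    apply: Hj0; move: jin; rewrite !inE negb_or => /andP[/andP[_ ->] ->]; by [].
  apply: HT => //; move: jin; rewrite !inE negb_or => /andP[/andP[_ ->] ->]; by [].
Qed.


Lemma sq_tri (I : finType) (P : pred I) (f g h : I -> R) :
  (forall i, P i -> 0 <= f i /\ f i <= g i + h i) ->
  Num.sqrt (\sum_(i | P i) f i ^+ 2) <=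
  Num.sqrt (\sum_(i | P i) g i ^+ 2) + Num.sqrt (\sum_(i | P i) h i ^+ 2).
Proof.
move=> H; apply: le_trans (mink P g h).
rewrite ler_sqrt ?sum_sq_ge0 //; apply: ler_sum => i Pi.
have [f0 fgh] := H i Pi.
rewrite ler_sqr ?nnegrE //; exact: le_trans fgh.
Qed.

Lemma SNm_tri (q p d dt : nat) G J (M A B : {set 'I_p}) (X : 'I_p -> 'M[R]_(d, dt)) :
  (forall i, frob (\sum_(j in M) G i j *m X j) <=
     frob (\sum_(j in A) G i j *m X j) + frob (\sum_(j in B) G i j *m X j)) ->
  @SNm q p d dt G J M X <= SNm G J A X + SNm G J B X.
Proof. by move=> H; apply: sq_tri => i _; split; [exact: frob_ge0 | exact: H]. Qed.

Lemma SNm_setID (q p d dt : nat) G J (W T : {set 'I_p}) (X : 'I_p -> 'M[R]_(d, dt)) :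
  T \subset W ->
  @SNm q p d dt G J W X <= SNm G J T X + SNm G J (W :\: T) X.
Proof.
move=> TW; apply: SNm_tri => i.
by rewrite (big_setID T) /= (finset.setIidPr TW); exact: frobD.
Qed.

Lemma SNm_compl (q p d dt : nat) G J (M : {set 'I_p}) (X : 'I_p -> 'M[R]_(d, dt)) :
  @SNm q p d dt G J M X <= SNm G J [set: 'I_p]%SET X + SNm G J (~: M) X.
Proof.
apply: SNm_tri => i.
have -> : \sum_(j in M) G i j *m X j =
   \sum_(j in [set: 'I_p]%SET) G i j *m X j - \sum_(j in ~: M) G i j *m X j.
  by rewrite [Y in _ = Y - _](big_setID M) /= finset.setTI finset.setTD addrK.
exact: frobB.
Qed.

Lemma sum_split_sub (I : finType) (W T : {set I}) (a : I -> R) :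
  T \subset W -> \sum_(j in W) a j = \sum_(j in T) a j + \sum_(j in W :\: T) a j.
Proof. by move=> TW; rewrite (big_setID T) /= (finset.setIidPr TW). Qed.

Lemma VNm_bound (p d dt : nat) (W : {set 'I_p}) (X : 'I_p -> 'M[R]_(d, dt)) (t : R) :
  0 <= t -> (forall j, j \in W -> frob (X j) <= t) ->
  VNm W X <= Num.sqrt (#|W|%:R) * t.
Proof.
move=> t0 H; rewrite -(ger0_norm t0) -sqrtr_sqr -sqrtrM // ler_sqrt ?mulr_ge0 ?sqr_ge0 //.
apply: le_trans (_ : \sum_(j in W) t ^+ 2 <= _).
  apply: ler_sum => j jW; rewrite ler_sqr ?nnegrE ?frob_ge0 //; exact: H.
by rewrite sumr_const mulr_natl.
Qed.

Lemma chunk (q p d dt : nat) (G : 'I_q -> 'I_p -> 'M[R]_(d, d)) J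
  (X : 'I_p -> 'M[R]_(d, dt)) (k : nat) (sig : R) :
  (0 < k)%N -> 0 <= sig ->
  (forall T : {set 'I_p}, (#|T| <= k)%N -> SNm G J T X <= sig * VNm T X) ->
  forall (W : {set 'I_p}) (t : R), 0 <= t -> (forall j, j \in W -> frob (X j) <= t) ->
  SNm G J W X <= sig * (Num.sqrt k%:R * t + (\sum_(j in W) frob (X j)) / Num.sqrt k%:R).
Proof.
move=> k0 sig0 Hs.
have sk0 : 0 < Num.sqrt (k%:R : R) by rewrite sqrtr_gt0 ltr0n.
have base : forall (W : {set 'I_p}) (t : R), 0 <= t -> (#|W| <= k)%N ->
    (forall j, j \in W -> frob (X j) <= t) -> SNm G J W X <= sig * (Num.sqrt k%:R * t).
  move=> W t t0 cW H; apply: le_trans (Hs W cW) _; apply: ler_wpM2l => //.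
  apply: le_trans (VNm_bound t0 H) _; apply: ler_wpM2r => //.
  by rewrite ler_sqrt ?ler0n // ler_nat.
move=> W; elim: {W}#|W| {-2}W (leqnn #|W|) => [|n IH] W cW t t0 H.
  apply: le_trans (base W t t0 _ H) _; first by move: cW; rewrite leqn0 => /eqP->.
  apply: ler_wpM2l => //; rewrite lerDl; apply: divr_ge0 (ltW sk0).
  by apply: sumr_ge0 => j _; exact: frob_ge0.
have [cWk|cWk] := leqP #|W| k.
  apply: le_trans (base W t t0 cWk H) _.
  apply: ler_wpM2l => //; rewrite lerDl; apply: divr_ge0 (ltW sk0).
  by apply: sumr_ge0 => j _; exact: frob_ge0.
have [T [TW cT HT]] := topk (fun j => frob (X j)) (ltnW cWk).
set t' := (\sum_(j in T) frob (X j)) / k%:R.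
have t'0 : 0 <= t' by apply: divr_ge0; [apply: sumr_ge0 => j _; exact: frob_ge0 | exact: ler0n].
have H' : forall j, j \in W :\: T -> frob (X j) <= t'.
  move=> j jin; rewrite /t' ler_pdivlMr ?ltr0n // mulr_natr -cT -sumr_const.
  by apply: ler_sum => i iT; exact: HT.
have cWT : (#|W :\: T| <= n)%N.
  rewrite cardsD (finset.setIidPr TW) cT; move: cW cWk k0; clear; lia.
apply: le_trans (SNm_setID G J X TW) _.
have b1 := base T t t0 (eq_leq cT) (fun j jT => H j (fintype.subsetP TW j jT)).
have b2 := IH _ cWT t' t'0 H'.
apply: le_trans (lerD b1 b2) _.
rewrite -mulrDr; apply: ler_wpM2l => //.
rewrite (sum_split_sub _ TW) mulrDl addrA.
have e : Num.sqrt (k%:R : R) * t' = (\sum_(j in T) frob (X j)) / Num.sqrt k%:R.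
  have kE := sqr_sqrtr (ler0n R k).
  rewrite /t'; move: (lt0r_neq0 sk0) kE; set s := Num.sqrt _; set S := \sum_(j in T) _ => sn0 kE.
  rewrite -kE; by field.
rewrite e; lra.
Qed.


Lemma Cb_ge0 (q p d : nat) (G : 'I_q -> 'I_p -> 'M[R]_(d, d)) : 0 <= Cb G.
Proof. by apply: sumr_ge0 => i _; apply: sumr_ge0 => j _; exact: frob_ge0. Qed.

Lemma sv_min_leCb (q p d : nat) (G : 'I_q -> 'I_p -> 'M[R]_(d, d)) J M :
  sv_min G J M <= Cb G.
Proof.
rewrite /sv_min -/(ratios G J M).
have [[r Sr]|S0] := pselect (ratios G J M !=set0).
  apply: (le_trans (y := r)); last exact: (ratios_ub Sr).
  apply: ge_inf => //; exists 0; exact: ratios_lb.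
have -> : ratios G J M = set0.
  by apply/eqP/negPn/negP => h; apply: S0; exact/set0P.
rewrite inf0; exact: Cb_ge0.
Qed.

Definition Jset (q p d : nat) (G : 'I_q -> 'I_p -> 'M[R]_(d, d)) (m : R) (M : {set 'I_p}) :=
  [set sv_min G J M | J in [set J : {set 'I_q} | #|J|%:R <= m]].

Lemma Jset_sup (q p d : nat) (G : 'I_q -> 'I_p -> 'M[R]_(d, d)) m M :
  0 <= m -> has_sup (Jset G m M) /\ 0 <= sup (Jset G m M).
Proof.
move=> m0.
have hs : has_sup (Jset G m M).
  split; first by exists (sv_min G finset.set0 M); exists finset.set0 => //=; rewrite cards0.
  by exists (Cb G) => r [J _ <-]; exact: sv_min_leCb.
split => //; apply: (le_trans (sv_min_ge0 G finset.set0 M)).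
by apply: ub_le_sup; [case: hs | exists finset.set0 => //=; rewrite cards0].
Qed.

Lemma sv_max_le_sM (q p d : nat) (G : 'I_q -> 'I_p -> 'M[R]_(d, d)) (m : R) (J : {set 'I_q}) (M : {set 'I_p}) :
  #|M|%:R <= m -> #|J|%:R <= m -> sv_max G J M <= sigma_max_m m G.
Proof.
move=> hM hJ; apply: ub_le_sup.
  by exists (Cb G) => v [M' [J' [_ _ ->]]]; exact: sv_max_le.
by exists M, J.
Qed.

Lemma exists_vnorm (p d : nat) (M : {set 'I_p}) :
  (0 < d)%N -> (0 < #|M|)%N -> exists x : 'I_p -> 'cV[R]_d, vnorm M x != 0.
Proof.
move=> d0 /card_gt0P [j0 j0M].
exists (fun j => const_mx 1); apply/eqP => h.
have := frob_le_vnorm (fun j => (const_mx 1 : 'cV[R]_d)) j0M; rewrite h => h2.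
have : frob (const_mx 1 : 'cV[R]_d) = 0 by apply/eqP; rewrite eq_le h2 frob_ge0.
move/frob_eq0/matrixP => /(_ (Ordinal d0) ord0); rewrite !mxE => /eqP.
by rewrite oner_eq0.
Qed.

End Aux.

Lemma prob_real (R : realType) (dsp : measure_display) (T : measurableType dsp)
  (P : probability T R) (A : set T) :
  measurable A -> exists r : R, P A = r%:E /\ 0 <= r <= 1.
Proof.
move=> mA; have h0 : (0 <= P A)%E := measure_ge0 P A.
have h1 := probability_le1 P mA.
have fin : P A \is a fin_num by rewrite ge0_fin_numE // (le_lt_trans h1) // ltry.
exists (fine (P A)); split; first by rewrite fineK.
by rewrite -!lee_fin fineK // h0 h1.
Qed.

Lemma prob_inter (R : realType) (dsp : measure_display) (T : measurableType dsp)
  (P : probability T R) (A B : set T) (a b : R) :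
  measurable A -> measurable B -> (a%:E <= P A)%E -> (b%:E <= P B)%E ->
  ((a + b - 1)%:E <= P (A `&` B))%E.
Proof.
move=> mA mB hA hB.
have mAc : measurable (~` A) by exact: measurableC.
have mBc : measurable (~` B) by exact: measurableC.
have [rA [eA _]] := prob_real P mA.
have [rB [eB _]] := prob_real P mB.
have [rI [eI _]] := prob_real P (measurableI _ _ mA mB).
have c1 := probability_setC P mA.
have c2 := probability_setC P mB.
have c3 := probability_setC P (measurableI _ _ mA mB).
have hU : (P (~` (A `&` B)) <= P (~` A) + P (~` B))%E.
  by rewrite setCI; exact: measureU2.
move: hU; rewrite c3. rewrite eI. rewrite c1 c2 eA eB => hU.
rewrite eA lee_fin in hA; rewrite eB lee_fin in hB.
rewrite lee_fin; move: hU; rewrite -!EFinB -EFinD lee_fin => hU.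
lra.
Qed.

Section Core.
Variable R : realType.

Lemma core (q p d dt : nat) (G : 'I_q -> 'I_p -> 'M[R]_(d, d))
  (h : 'I_p -> 'M[R]_(d, dt)) (S : {set 'I_p}) (mu c5 lam : R) :
  (0 < d)%N -> 0 < mu -> 0 < c5 -> 0 <= lam ->
  c5 <= sigma_max_m (16 * (#|S|%:R) / mu ^+ 2) G ->
  mu <= sigma_min_m (16 * (#|S|%:R) / mu ^+ 2) G
          / sigma_max_m (16 * (#|S|%:R) / mu ^+ 2) G ->
  \sum_(j in ~: S) frob (h j) <= \sum_(j in S) frob (h j) ->
  (forall i, frob (\sum_j G i j *m h j) <= lam) ->
  \sum_j frob (h j) <= 32 / c5 * #|S|%:R / mu ^+ 2 * lam.
Proof.
move=> d0 mu0 c50 lam0.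
set s := #|S|. set m := 16 * s%:R / mu ^+ 2.
set sM := sigma_max_m m G. set sm := sigma_min_m m G.
move=> hc5 hmu hcone hG.
have m0 : 0 <= m by rewrite /m; apply: divr_ge0; [apply: mulr_ge0 | apply: sqr_ge0].
have sM0 : 0 < sM by apply: lt_le_trans hc5.
have smge : mu * sM <= sm by rewrite -ler_pdivlMr.
have sm0 : 0 < sm by apply: lt_le_trans smge; exact: mulr_gt0.
set Vset := [set v | exists M : {set 'I_p}, [/\ (0 < #|M|)%N, (#|M|%:R <= m)
     & v = sup [set sv_min G J M | J in [set J : {set 'I_q} | #|J|%:R <= m]]]].
have Vlb : lbound Vset 0.
  by move=> v [M [_ _ ->]]; case: (Jset_sup G M m0).
have Vne : Vset !=set0.
  have [//|hn] := pselect (Vset !=set0).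
  have : Vset = set0 by apply/eqP/negPn/negP => hh; apply: hn; exact/set0P.
  by move=> V0; move: sm0; rewrite /sm /sigma_min_m -/Vset V0 inf0 ltxx.
have [v0 [M0 [M0p M0m _]]] := Vne.
have smM0 : sm <= sup (Jset G m M0).
  by apply: ge_inf; [exists 0 | exists M0].
have s0 : (0 < s)%N.
  rewrite lt0n; apply/negP => /eqP s0; move: M0m; rewrite /m s0 mulr0 mul0r.
  by move: M0p; rewrite -(ltr0n R) => a b; move: (lt_le_trans a b); rewrite ltxx.
have smsM : sm <= sM.
  apply: le_trans smM0 _; apply: ge_sup; first by case: (Jset_sup G M0 m0) => [[]].
  move=> r [J /= hJ <-].
  have [x xn0] := @exists_vnorm R _ _ M0 d0 M0p.
  apply: le_trans; first exact: (sv_min_le_max _ _ xn0).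
  exact: sv_max_le_sM.
have mu1 : mu <= 1.
  have : mu * sM <= 1 * sM by rewrite mul1r; exact: le_trans smsM.
  by rewrite ler_pM2r.
set x8 := 8 * s%:R / mu ^+ 2.
have x80 : 0 <= x8 by rewrite /x8; apply: divr_ge0; [apply: mulr_ge0 | apply: sqr_ge0].
set k := (Num.truncn x8).+1.
have [kl ku] : x8 < k%:R /\ k%:R <= x8 + 1.
  have /andP[a b] := truncn_itv x80; split => //.
  by rewrite /k -addn1 natrD lerD2r.
have k0 : (0 < k)%N by [].
have ss : s%:R <= s%:R / mu ^+ 2 :> R.
  rewrite ler_pdivlMr ?exprn_gt0 //.
  have : mu ^+ 2 <= 1 by rewrite expr_le1 // ltW.
  have : 0 <= s%:R :> R by exact: ler0n.
  nra.
have s1 : 1 <= s%:R :> R by rewrite ler1n.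
have skm : (s + k)%:R <= m.
  rewrite natrD; apply: le_trans (lerD (lexx _) ku) _.
  have -> : m = 2 * x8 by rewrite /m /x8; rewrite !mulrA; congr (_ * _ / _); by rewrite -natrM.
  have : x8 = 8 * (s%:R / mu ^+ 2) by rewrite /x8 mulrA.
  lra.
set U := ~: S.
have [T1 [T1U cT1 HT1]] := topk (fun j => frob (h j)) (geq_minr k #|U|).
set M := S :|: T1.
have cM : (#|M| <= s + k)%N.
  apply: leq_trans (leq_card_setU S T1) _; rewrite leq_add2l cT1; exact: geq_minl.
have Mm : #|M|%:R <= m by apply: le_trans skm; rewrite ler_nat.
have Mp : (0 < #|M|)%N by apply: leq_trans s0 (subset_leq_card (finset.subsetUl S T1)).
have [hsM supM0] := Jset_sup G M m0.
have smM : sm <= sup (Jset G m M) by apply: ge_inf; [exists 0 | exists M].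
have eps0 : 0 < mu * sM / 4 by apply: divr_gt0 => //; exact: mulr_gt0.
have [rr [J /= hJ <-] hr] := sup_adherent eps0 hsM.
set sg := sv_min G J M.
have sgge : 3 / 4 * (mu * sM) <= sg by rewrite /sg; lra.
set a := fun j => frob (h j).
set W := ~: M.
have WE : W = U :\: T1 by rewrite /W /M finset.setCU finset.setDE.
set t := (\sum_(j in T1) a j) / k%:R.
have t0 : 0 <= t by apply: divr_ge0; [apply: sumr_ge0 => j _; exact: frob_ge0 | exact: ler0n].
have Wt : forall j, j \in W -> a j <= t.
  move=> j; rewrite WE => jin.
  have [kU|Uk] := leqP k #|U|.
    move: cT1; rewrite (minn_idPl kU) => cT1.
    rewrite /t ler_pdivlMr ?ltr0n // mulr_natr -cT1 -sumr_const.
    by apply: ler_sum => i iT; exact: HT1.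
  move: cT1; rewrite (minn_idPr (ltnW Uk)) => cT1.
  have : T1 == U by rewrite finset.eqEcard T1U cT1 leqnn.
  by move/eqP => e; move: jin; rewrite e finset.setDv inE.
have sumU : \sum_(j in U) a j = \sum_(j in T1) a j + \sum_(j in W) a j.
  by rewrite WE; exact: sum_split_sub.
have sk0 : 0 < Num.sqrt (k%:R : R) by rewrite sqrtr_gt0 ltr0n.
have chk : SNm G J W h <= sM * (Num.sqrt k%:R * t + (\sum_(j in W) a j) / Num.sqrt k%:R).
  apply: (chunk k0 (ltW sM0)) => //.
  move=> T cT; apply: le_trans (SNm_upper G J T h) _; apply: ler_wpM2r; first exact: VNm_ge0.
  apply: sv_max_le_sM => //; apply: le_trans skm; rewrite ler_nat; exact: leq_trans cT (leq_addl _ _).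
have e : Num.sqrt (k%:R : R) * t = (\sum_(j in T1) a j) / Num.sqrt k%:R.
  have kE := sqr_sqrtr (ler0n R k).
  rewrite /t; move: (lt0r_neq0 sk0) kE; set sq := Num.sqrt _; set S1 := \sum_(j in T1) _ => sn0 kE.
  rewrite -kE; by field.
have Zb : SNm G J W h * Num.sqrt k%:R <= sM * \sum_(j in U) a j.
  rewrite -ler_pdivlMr // sumU; apply: le_trans chk _; rewrite e -mulrDl mulrA //.
set Y := SNm G J [set: 'I_p]%SET h.
set Z := SNm G J W h.
set x := VNm M h.
set A := \sum_(j in S) a j.
set B := \sum_(j in U) a j.
have Y0 : 0 <= Y by exact: SNm_ge0.
have Z0 : 0 <= Z by exact: SNm_ge0.
have x0 : 0 <= x by exact: VNm_ge0.
have A0 : 0 <= A by apply: sumr_ge0 => j _; exact: frob_ge0.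
have B0 : 0 <= B by apply: sumr_ge0 => j _; exact: frob_ge0.
have hY : Y ^+ 2 <= m * lam ^+ 2.
  rewrite /Y /SNm sqr_sqrtr; last by apply: sumr_ge0 => i _; exact: sqr_ge0.
  apply: le_trans (_ : \sum_(i in J) lam ^+ 2 <= _).
    apply: ler_sum => i _; rewrite ler_sqr ?nnegrE ?frob_ge0 //.
    have -> : \sum_(j in [set: 'I_p]%SET) G i j *m h j = \sum_j G i j *m h j.
      by apply: eq_bigl => j; rewrite finset.in_setT.
    exact: hG.
  rewrite sumr_const -mulr_natl; apply: ler_wpM2r => //; exact: sqr_ge0.
have h1 : sg * x <= Y + Z.
  apply: le_trans (SNm_lower G J M h) _; exact: SNm_compl.
have hA : A ^+ 2 <= s%:R * x ^+ 2.
  apply: le_trans (sum_le_card (fun j => j \in S) a) _.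
  have -> : #|[pred j | j \in S]| = s by apply: eq_card => j.
  apply: ler_wpM2l; first exact: ler0n.
  rewrite /x /VNm sqr_sqrtr; last by apply: sumr_ge0 => i _; exact: sqr_ge0.
  rewrite (sum_split_sub (fun j => frob (h j) ^+ 2) (finset.subsetUl S T1)) lerDl.
  by apply: sumr_ge0 => i _; exact: sqr_ge0.
have hBA : B <= A by [].
have hsum : \sum_j a j = A + B.
  rewrite (bigID (fun j => j \in S)) /=; congr (_ + _).
  by apply: eq_bigl => j; rewrite finset.in_setC.
set r := Num.sqrt (k%:R : R).
have r2 : r ^+ 2 = k%:R by rewrite sqr_sqrtr // ler0n.
set u := s%:R / mu ^+ 2.
have mu2 : 0 < mu ^+ 2 by exact: exprn_gt0.
have us : u * mu ^+ 2 = s%:R by rewrite /u divfK // lt0r_neq0.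
have mE : m = 16 * u by rewrite /m /u mulrA.
have xE : x8 = 8 * u by rewrite /x8 /u mulrA.
have u0 : 0 <= u by rewrite /u; apply: divr_ge0; [exact: ler0n | exact: ltW].
have sg0 : 0 <= sg by have := mulr_gt0 mu0 sM0; lra.
have hSA : sM * A <= sg * x * r / 2.
  rewrite -ler_sqr ?nnegrE; last first.
    by apply: divr_ge0 => //; apply: mulr_ge0; [exact: mulr_ge0 | exact: ltW].
    by apply: mulr_ge0 => //; exact: ltW.
  have q1 : (sM * A) ^+ 2 <= sM ^+ 2 * (s%:R * x ^+ 2).
    by rewrite exprMn; apply: ler_wpM2l => //; exact: sqr_ge0.
  have q2 : (3 / 4 * (mu * sM)) ^+ 2 <= sg ^+ 2.
    by rewrite ler_sqr ?nnegrE //; apply: mulr_ge0 => //; nra.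
  have q3 : 8 * u <= r ^+ 2 by rewrite r2 -xE ltW.
  have q4 : (sg * x * r / 2) ^+ 2 = sg ^+ 2 * x ^+ 2 * r ^+ 2 / 4.
    by field.
  rewrite q4; apply: le_trans q1 _.
  rewrite -us.
  set X2 := x ^+ 2; set S2 := sg ^+ 2; set R2 := r ^+ 2; set M2 := mu ^+ 2.
  have X20 : 0 <= X2 by exact: sqr_ge0.
  have q2' : 9 / 16 * (M2 * sM ^+ 2) <= S2.
    apply: le_trans _ q2; rewrite /M2.
    have -> : (3 / 4 * (mu * sM)) ^+ 2 = 9 / 16 * (mu ^+ 2 * sM ^+ 2) :> R by field.
    exact: lexx.
  have p1 : 9 / 16 * (M2 * sM ^+ 2) * X2 * (8 * u) <= S2 * X2 * R2.
    have sM2 : 0 <= sM ^+ 2 by exact: sqr_ge0.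
    have M20 : 0 <= M2 by exact: ltW.
    apply: ler_pM; [| | by apply: ler_wpM2r | by []].
      apply: mulr_ge0 => //; apply: mulr_ge0; [lra | exact: mulr_ge0].
    lra.
  have sM2 : 0 <= sM ^+ 2 by exact: sqr_ge0.
  have M20 : 0 <= M2 by exact: ltW.
  have : 0 <= u * M2 * sM ^+ 2 * X2 by apply: mulr_ge0 => //; apply: mulr_ge0 => //; exact: mulr_ge0.
  nra.
have r0 : 0 < r by [].
have hZ : Z <= sg * x / 2.
  rewrite -(ler_pM2r r0); apply: le_trans Zb _.
  apply: le_trans (_ : sM * A <= _); first by apply: ler_wpM2l => //; exact: ltW.
  apply: le_trans hSA _; rewrite le_eqVlt; apply/orP; left; apply/eqP.
  by rewrite mulrAC.
have h2 : sg * x <= 2 * Y by lra.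
have h3 : (A * sg) ^+ 2 <= (8 * u * mu * lam) ^+ 2.
  have e1 : (8 * u * mu * lam) ^+ 2 = 4 * (u * mu ^+ 2) * (16 * u * lam ^+ 2) by field.
  rewrite e1 us -mE exprMn.
  apply: le_trans (_ : s%:R * x ^+ 2 * sg ^+ 2 <= _); first by apply: ler_wpM2r => //; exact: sqr_ge0.
  have h4 : (sg * x) ^+ 2 <= (2 * Y) ^+ 2 by rewrite ler_sqr ?nnegrE //; [exact: mulr_ge0 | lra].
  have h5 : 0 <= s%:R :> R by exact: ler0n.
  have e2 : s%:R * x ^+ 2 * sg ^+ 2 = s%:R * (sg * x) ^+ 2 by rewrite exprMn; ring.
  rewrite e2; apply: le_trans (ler_wpM2l h5 h4) _.
  have e3 : (2 * Y) ^+ 2 = 4 * Y ^+ 2 by ring.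
  rewrite e3; have := ler_wpM2l h5 hY; nra.
have h6 : A * sg <= 8 * u * mu * lam.
  rewrite -ler_sqr ?nnegrE //; [exact: mulr_ge0 | apply: mulr_ge0 => //; apply: mulr_ge0; [lra | exact: ltW]].
have h7 : A * (3 / 4 * (mu * c5)) <= A * sg.
  apply: ler_wpM2l => //; apply: le_trans _ sgge.
  apply: ler_wpM2l; first lra.
  by apply: ler_wpM2l => //; exact: ltW.
have h8 : A * (3 / 4 * (mu * c5)) <= 8 * u * mu * lam by exact: le_trans h7 h6.
have h9 : A * c5 <= 32 / 3 * u * lam.
  have e4 : A * (3 / 4 * (mu * c5)) = mu * (3 / 4 * (A * c5)) by ring.
  have e5 : 8 * u * mu * lam = mu * (8 * (u * lam)) by ring.
  move: h8; rewrite e4 e5 ler_pM2l // => h8; lra.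
rewrite hsum.
have -> : 32 / c5 * s%:R / mu ^+ 2 * lam = 32 * u * lam / c5.
  rewrite /u; field; apply/andP; split; exact: lt0r_neq0.
rewrite ler_pdivlMr // mulrDl.
have : B * c5 <= A * c5 by apply: ler_wpM2r => //; exact: ltW.
have : 0 <= u * lam by exact: mulr_ge0.
lra.
Qed.
End Core.

End Helpers.

Theorem theorem3 (R : realType) (c5 C1 : R) :
  0 < c5 -> 0 <= C1 ->
  exists C2 : R, 0 < C2 /\
  forall (p d dt L : nat)
    (theta0 : 'I_p -> 'M[R]_(d, dt))
    (G : 'I_(p * L) -> 'I_p -> 'M[R]_(d, d))
    (g0 Rb : 'I_(p * L) -> 'M[R]_(d, dt))
    (dsp : measure_display) (T : measurableType dsp) (P : probability T R)
    (Gh : T -> 'I_(p * L) -> 'I_p -> 'M[R]_(d, d))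
    (gh0 : T -> 'I_(p * L) -> 'M[R]_(d, dt))
    (gamma eps1 delta1 eps2 delta2 mu K : R),
    (0 < p)%N -> (0 < d)%N -> (0 < dt)%N -> (0 < L)%N ->
    (* model identity G theta0 + g(0) + R = 0 *)
    (forall i, gfun G g0 theta0 i + Rb i = 0) ->
    0 <= gamma ->
    (* (B1) *)
    0 < eps1 -> 0 < delta1 ->
    (exists E : set T, [/\ measurable E, ((1 - delta1)%:E <= P E)%E &
       forall w, E w ->
         bnormmax2 (fun i j => Gh w i j - G i j) <= eps1 /\
         bnormmax (fun i => gh0 w i - g0 i) <= eps1]) ->
    (* (B2) *)
    0 < eps2 -> bnormmax Rb <= eps2 ->
    (* (B3) *)
    0 < delta2 ->
    (exists E : set T, [/\ measurable E, ((1 - delta2)%:E <= P E)%E &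
       forall w, E w -> bnormmax (gfun (Gh w) (gh0 w) theta0) <= gamma]) ->
    (* (B4), with m = 16 s / mu^2 *)
    0 < mu ->
    c5 <= sigma_max_m (16 * (#|bsupp theta0|%:R) / mu ^+ 2) G ->
    mu <= sigma_min_m (16 * (#|bsupp theta0|%:R) / mu ^+ 2) G
          / sigma_max_m (16 * (#|bsupp theta0|%:R) / mu ^+ 2) G ->
    (* ||theta0||_1 <= K and gamma_n <~ (K+1) eps1 + eps2 *)
    bnorm1 theta0 <= K ->
    gamma <= C1 * ((K + 1) * eps1 + eps2) ->
    exists E : set T, [/\ measurable E,
      ((1 - (delta1 + delta2))%:E <= P E)%E &
      forall w, E w ->
        forall thetah : 'I_p -> 'M[R]_(d, dt),
          is_rmd (Gh w) (gh0 w) gamma thetah ->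
          bnorm1 (fun j => thetah j - theta0 j)
            <= C2 * (#|bsupp theta0|%:R) / mu ^+ 2 * ((K + 1) * eps1 + eps2)].
Proof.
move=> c50 C10.
exists (32 * (C1 + 1) / c5); split.
  by apply: divr_gt0 => //; apply: mulr_gt0 => //; lra.
move=> p d dt L theta0 G g0 Rb dsp T P Gh gh0 gamma eps1 delta1 eps2 delta2 mu K
  p0 d0 dt0 L0 model gam0 e10 dl10 [E1 [mE1 pE1 hE1]] e20 hRb dl20 [E2 [mE2 pE2 hE2]]
  mu0 hc5 hmu hK hgam.
exists (E1 `&` E2); split.
- exact: measurableI.
- have := prob_inter mE1 mE2 pE1 pE2.
  by rewrite (_ : 1 - delta1 + (1 - delta2) - 1 = 1 - (delta1 + delta2)) //; ring.
move=> w [w1 w2] thetah [feas opt].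
have [hGd hgd] := hE1 w w1.
have f0 := hE2 w w2.
have hb : bnorm1 thetah <= bnorm1 theta0 := opt theta0 f0.
set S := bsupp theta0.
set h := fun j => thetah j - theta0 j.
have K0 : 0 <= K by apply: le_trans hK; exact: bnorm1_ge0.
have split_sum : forall f : 'I_p -> R, \sum_j f j = \sum_(j in S) f j + \sum_(j in ~: S) f j.
  move=> f; rewrite (bigID (fun j => j \in S)) /=; congr (_ + _).
  by apply: eq_bigl => j; rewrite finset.in_setC.
have z0 : forall j, j \in ~: S -> theta0 j = 0.
  move=> j; rewrite finset.in_setC /S /bsupp finset.inE negbK => /eqP; exact: frob_eq0.
have cone : \sum_(j in ~: S) frob (h j) <= \sum_(j in S) frob (h j).
  have e1 : \sum_(j in ~: S) frob (h j) = \sum_(j in ~: S) frob (thetah j).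
    by apply: eq_bigr => j jS; rewrite /h z0 // subr0.
  have e2 : \sum_(j in ~: S) frob (theta0 j) = 0.
    by apply: big1 => j jS; rewrite z0 // frob0.
  have e3 : \sum_(j in S) frob (theta0 j) <= \sum_(j in S) frob (thetah j) + \sum_(j in S) frob (h j).
    rewrite -big_split; apply: ler_sum => j _.
    have -> : theta0 j = thetah j - h j by rewrite /h opprB addrC subrK.
    exact: frobB.
  move: hb; rewrite /bnorm1 (split_sum (fun j => frob (thetah j))) (split_sum (fun j => frob (theta0 j))) e2 e1.
  lra.
set lam := gamma + eps1 * K + eps1 + eps2.
have lam0 : 0 <= lam by rewrite /lam; have := mulr_ge0 (ltW e10) K0; lra.
have hG : forall i, frob (\sum_j G i j *m h j) <= lam.
  move=> i.
  have hm := model i; rewrite /gfun /bapply in hm.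
  have idm : \sum_j G i j *m h j =
     (\sum_j Gh w i j *m thetah j + gh0 w i) - \sum_j (Gh w i j - G i j) *m thetah j
     - (gh0 w i - g0 i) + Rb i.
    rewrite /h; under eq_bigr do rewrite mulmxBr.
    under [\sum_j (Gh w i j - G i j) *m thetah j]eq_bigr do rewrite mulmxBl.
    rewrite !sumrB; move: hm.
    set X := \sum_j G i j *m thetah j; set Y := \sum_j G i j *m theta0 j;
    set Z := \sum_j Gh w i j *m thetah j => hm.
    apply/matrixP => a b; have := congr1 (fun M : 'M[R]_(d, dt) => M a b) hm; rewrite !mxE => hm'.
    lra.
  rewrite idm.
  have t1 : frob (\sum_j Gh w i j *m thetah j + gh0 w i) <= gamma.
    by apply: le_trans feas; exact: (le_bnormmax (gfun (Gh w) (gh0 w) thetah) i).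
  have t2 : frob (\sum_j (Gh w i j - G i j) *m thetah j) <= eps1 * K.
    apply: le_trans; first exact: frob_sum.
    apply: le_trans (_ : \sum_j eps1 * frob (thetah j) <= _).
      apply: ler_sum => j _; apply: le_trans; first exact: frobM.
      apply: ler_wpM2r; first exact: frob_ge0.
      by apply: le_trans hGd; exact: (le_bnormmax2 (fun i j => Gh w i j - G i j) i j).
    rewrite -mulr_sumr; apply: ler_wpM2l; first exact: ltW.
    exact: le_trans hb hK.
  have t3 : frob (gh0 w i - g0 i) <= eps1.
    by apply: le_trans hgd; exact: (le_bnormmax (fun i => gh0 w i - g0 i) i).
  have t4 : frob (Rb i) <= eps2 by apply: le_trans hRb; exact: le_bnormmax.
  apply: le_trans; first exact: frobD.
  apply: le_trans (lerD (frobB _ _) (lexx _)) _.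
  apply: le_trans (lerD (lerD (frobB _ _) (lexx _)) (lexx _)) _.
  rewrite /lam; lra.
have := core d0 mu0 c50 lam0 hc5 hmu cone hG.
rewrite -/S => hc.
apply: le_trans hc _.
set Q := (K + 1) * eps1 + eps2.
have lamQ : lam <= (C1 + 1) * Q by rewrite /lam /Q; lra.
have coef0 : 0 <= 32 / c5 * #|S|%:R / mu ^+ 2.
  apply: divr_ge0; last exact: sqr_ge0.
  apply: mulr_ge0; last exact: ler0n.
  by apply: divr_ge0; [lra | exact: ltW].
apply: le_trans (ler_wpM2l coef0 lamQ) _.
rewrite le_eqVlt; apply/orP; left; apply/eqP.
field; apply/andP; split; exact: lt0r_neq0.
Qed.
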